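(* Let $m\ge2$, $k\ge2$, $n\ge1$, $\mathcal{A}\in\mathbb{R}_+^{[m,n]}$ and $\mathcal{B}\in\mathbb{R}_+^{[k,n]}$. Then \[r(\mathcal{A})(r(\mathcal{B}))^{m-1}\le\rho(\mathcal{A}\mathcal{B})\le R(\mathcal{A})(R(\mathcal{B}))^{m-1}.\]
   Context: $[n]=\{1,\ldots,n\}$. $\mathbb{R}_+^{[m,n]}$ denotes the set of order $m$, dimension $n$ tensors with nonnegative real entries. For a tensor $\mathcal{T}=(t_{i_1\cdots i_p})$ of order $p$ and dimension $n$: $r_i(\mathcal{T})=\sum_{i_2,\ldots,i_p=1}^n|t_{ii_2\cdots i_p}|$, $r(\mathcal{T})=\min_{i\in[n]}r_i(\mathcal{T})$, $R(\mathcal{T})=\max_{i\in[n]}r_i(\mathcal{T})$. General product: for $\mathcal{A}=(a_{i_1\cdots i_m})$ of order $m\ge2$ and $\mathcal{B}=(b_{i_1\cdots i_k})$ of order $k$, $\mathcal{A}\mathcal{B}=(c_{i\alpha_1\cdots\alpha_{m-1}})$ is the order $(m-1)(k-1)+1$, dimension $n$ tensor with $c_{i\alpha_1\cdots\alpha_{m-1}}=\sum_{i_2,\ldots,i_m=1}^n a_{ii_2\cdots i_m}b_{i_2\alpha_1}\cdots b_{i_m\alpha_{m-1}}$, $i\in[n]$, $\alpha_j\in[n]^{k-1}$ (where $b_{j\alpha}$ with $\alpha=(j_2,\ldots,j_k)$ means $b_{jj_2\cdots j_k}$). Eigenvalues of a tensor $\mathcal{T}$ of order $p\ge2$: $\lambda\in\mathbb{C}$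 such that there is a nonzero $x\in\mathbb{C}^n$ with $\sum_{i_2,\ldots,i_p=1}^n t_{ii_2\cdots i_p}x_{i_2}\cdots x_{i_p}=\lambda x_i^{p-1}$ for all $i\in[n]$; $\rho(\mathcal{T})$ is the maximum modulus of the eigenvalues. *)

(* Defs.v *)
From HB Require Import structures.
From mathcomp Require Import all_boot all_order all_algebra.
From mathcomp Require Import classical_sets reals complex.
Set Implicit Arguments. Unset Strict Implicit. Unset Printing Implicit Defensive.
Import Order.TTheory GRing.Theory Num.Theory.
Local Open Scope ring_scope.
Local Open Scope classical_set_scope.
Local Open Scope complex_scope.

(* A tensor of order p and dimension n over a type K:  T i t  is the entry
   t_{i i_2 ... i_p}, where the trailing indices (i_2,...,i_p) are given by
   t : {ffun 'I_(p.-1) -> 'I_n}  (t j = i_{j+2}). *)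
Definition tensor (K : Type) (p n : nat) := 'I_n -> {ffun 'I_p.-1 -> 'I_n} -> K.

Definition nonneg_tensor (R : realType) (p n : nat) (T : tensor R p n) :=
  forall i t, 0 <= T i t.

(* r_i(T), r(T) = min_i r_i(T), R(T) = max_i r_i(T)  (inf/sup of a finite
   nonempty set when n >= 1, i.e. min/max). *)
Definition row_sum (R : realType) p n (T : tensor R p n) (i : 'I_n) : R :=
  \sum_(t : {ffun 'I_p.-1 -> 'I_n}) `|T i t|.
Definition rmin (R : realType) p n (T : tensor R p n) : R :=
  inf (range (row_sum T)).
Definition rmax (R : realType) p n (T : tensor R p n) : R :=
  sup (range (row_sum T)).

(* General product AB of A (order m) and B (order k): order (m-1)(k-1)+1.
   Trailing multi-index (alpha_1,...,alpha_{m-1}), alpha_j in [n]^(k-1),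
   flattened with alpha_j occupying positions j*(k-1) + l (mxvec_index j l). *)
Definition tprod (R : realType) (m k n : nat) (A : tensor R m n) (B : tensor R k n)
  : tensor R ((m.-1 * k.-1).+1) n :=
  fun i (al : {ffun 'I_(m.-1 * k.-1) -> 'I_n}) =>
    \sum_(t : {ffun 'I_m.-1 -> 'I_n})
       A i t * \prod_(j < m.-1)
          B (t j) [ffun l : 'I_k.-1 => al (mxvec_index j l)].

Definition eigenvalue (R : realType) p n (T : tensor R p n) (lam : R[i]) :=
  exists x : 'I_n -> R[i], (exists i, x i != 0) /\
    forall i, \sum_(t : {ffun 'I_p.-1 -> 'I_n}) (T i t)%:C * \prod_(j < p.-1) x (t j)
              = lam * x i ^+ p.-1.

Definition spec_rad (R : realType) p n (T : tensor R p n) : R :=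
  sup [set r : R | exists lam, eigenvalue T lam /\ r%:C = `|lam|].

(* Main.v *)
Require Import Defs.
From HB Require Import structures.
From mathcomp Require Import all_boot all_order all_algebra.
From mathcomp Require Import classical_sets reals complex.
From mathcomp Require Import boolp topology normedtype derive exp.
Set Implicit Arguments. Unset Strict Implicit. Unset Printing Implicit Defensive.
Import Order.TTheory GRing.Theory Num.Theory numFieldTopology.Exports numFieldNormedType.Exports.
Local Open Scope ring_scope.
Local Open Scope classical_set_scope.
Section TV.
Context (R : realType) (p n : nat) (T : tensor R p n).
Local Notation q := p.-1.

Definition tv (x : 'I_n -> R) (i : 'I_n) : R :=
  \sum_(t : {ffun 'I_p.-1 -> 'I_n}) T i t * \prod_(j < p.-1) x (t j).

Lemma tv_le (x y : 'I_n -> R) i : nonneg_tensor T ->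
  (forall j, 0 <= x j <= y j) -> tv x i <= tv y i.
Proof.
move=> T0 hxy; apply: ler_sum => t _; apply: ler_wpM2l; first exact: T0.
by apply: ler_prod => j _; exact: hxy.
Qed.

Lemma tv_ge0 (x : 'I_n -> R) i : nonneg_tensor T ->
  (forall j, 0 <= x j) -> 0 <= tv x i.
Proof.
move=> T0 hx; apply: sumr_ge0 => t _; apply: mulr_ge0; first exact: T0.
by apply: prodr_ge0 => j _.
Qed.

Lemma tv_scale (s : R) (x : 'I_n -> R) i :
  tv (fun j => s * x j) i = s ^+ q * tv x i.
Proof.
rewrite /tv mulr_sumr; apply: eq_bigr => t _.
by rewrite big_split /= prodr_const card_ord mulrCA.
Qed.

Lemma tv_const (M : R) i : nonneg_tensor T -> tv (fun=> M) i = row_sum T i * M ^+ q.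
Proof.
move=> T0; rewrite /tv /row_sum mulr_suml; apply: eq_bigr => t _.
by rewrite prodr_const card_ord ger0_norm //; exact: T0.
Qed.

Lemma tv_ub (x : 'I_n -> R) (M : R) i : nonneg_tensor T ->
  (forall j, 0 <= x j <= M) -> tv x i <= row_sum T i * M ^+ q.
Proof. by move=> T0 hx; rewrite -tv_const //; apply: tv_le. Qed.

Lemma tv_term (x : 'I_n -> R) i j0 : nonneg_tensor T ->
  (forall j, 0 <= x j) -> T i [ffun=> j0] * x j0 ^+ q <= tv x i.
Proof.
move=> T0 hx; rewrite /tv (bigD1 [ffun=> j0]) //=.
rewrite (eq_bigr (fun=> x j0)); last by move=> j _; rewrite ffunE.
rewrite prodr_const card_ord lerDl; apply: sumr_ge0 => t _.
by apply: mulr_ge0; [exact: T0| apply: prodr_ge0].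
Qed.

Lemma tv_lt (x y : 'I_n -> R) i j0 : nonneg_tensor T -> (0 < q)%N ->
  0 < T i [ffun=> j0] ->
  (forall j, 0 <= x j <= y j) -> x j0 < y j0 -> tv x i < tv y i.
Proof.
move=> T0 q0 Tpos hxy hlt; rewrite /tv (bigD1 [ffun=> j0]) //= [X in _ < X](bigD1 [ffun=> j0]) //=.
apply: ltr_leD.
  rewrite (eq_bigr (fun=> x j0)); last by move=> j _; rewrite ffunE.
  rewrite [X in _ < _ * X](eq_bigr (fun=> y j0)); last by move=> j _; rewrite ffunE.
  rewrite !prodr_const card_ord ltr_pM2l // ltrXn2r //; first by rewrite -lt0n.
  by case/andP: (hxy j0).
apply: ler_sum => t _; apply: ler_wpM2l; first exact: T0.
by apply: ler_prod => j _; exact: hxy.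
Qed.

End TV.
Section Cont.
Context (R : realType) (m : nat).
Local Notation V := 'rV[R]_m.

Lemma cont_sum (I : Type) (s : seq I) (G : I -> V -> R) v :
  (forall t, {for v, continuous (G t)}) -> {for v, continuous (fun v => \sum_(t <- s) G t v)}.
Proof.
move=> hG; elim: s => [|a s IH].
  rewrite /prop_for (_ : (fun v => _) = (fun=> 0)); last by apply: funext => w; rewrite big_nil.
  exact: cst_continuous.
rewrite /prop_for (_ : (fun v => _) = (fun v => G a v + \sum_(t <- s) G t v)); last by apply: funext => w; rewrite big_cons.
exact: (continuousD (hG a) IH).
Qed.

Lemma cont_prod (I : Type) (s : seq I) (G : I -> V -> R) v :
  (forall t, {for v, continuous (G t)}) -> {for v, continuous (fun v => \prod_(t <- s) G t v)}.
Proof.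
move=> hG; elim: s => [|a s IH].
  rewrite /prop_for (_ : (fun v => _) = (fun=> 1)); last by apply: funext => w; rewrite big_nil.
  exact: cst_continuous.
rewrite /prop_for (_ : (fun v => _) = (fun v => G a v * \prod_(t <- s) G t v)); last by apply: funext => w; rewrite big_cons.
exact: (continuousM (hG a) IH).
Qed.

Lemma cont_min (I : Type) (s : seq I) (x0 : V -> R) (G : I -> V -> R) v :
  {for v, continuous x0} -> (forall t, {for v, continuous (G t)}) ->
  {for v, continuous (fun v => \big[Order.min/x0 v]_(t <- s) G t v)}.
Proof.
move=> h0 hG; elim: s => [|a s IH].
  rewrite /prop_for (_ : (fun v => _) = x0) //; by apply: funext => w; rewrite big_nil.
rewrite /prop_for (_ : (fun v => _) = (fun v => Order.min (G a v) (\big[Order.min/x0 v]_(t <- s) G t v))); last by apply: funext => w; rewrite big_cons.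
exact: (continuous_min (hG a) IH).
Qed.

Lemma cont_exp (f : V -> R) v k : {for v, continuous f} ->
  {for v, continuous (fun v => f v ^+ k)}.
Proof.
move=> hf; elim: k => [|k IH].
  rewrite /prop_for (_ : (fun v => _) = (fun=> 1)); last by apply: funext => w; rewrite expr0.
  exact: cst_continuous.
rewrite /prop_for (_ : (fun v => _) = (fun v => f v * f v ^+ k)); last by apply: funext => w; rewrite exprS.
exact: (continuousM hf IH).
Qed.

End Cont.

From mathcomp Require Import ring lra.
Lemma argmax_ex (R : realType) n (f : 'I_n.+1 -> R) : exists j, forall i, f i <= f j.
Proof.
case: (@arg_maxP _ _ _ ord0 xpredT f isT) => j _ hj; exists j => i; exact: hj.
Qed.

Lemma rs_ge_term (R : realType) p n (T : tensor R p n) i t : nonneg_tensor T ->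
  T i t <= row_sum T i.
Proof.
move=> T0; rewrite /row_sum (bigD1 t) //= ger0_norm ?T0 // lerDl.
by apply: sumr_ge0 => ? _.
Qed.

Lemma powR_root (R : realType) (a : R) (q : nat) : (0 < q)%N -> 0 <= a ->
  (a `^ (q%:R^-1)) ^+ q = a.
Proof.
move=> q0 a0; rewrite -powR_mulrn ?powR_ge0 // -powRrM mulVf ?powRr1 //.
by rewrite pnatr_eq0 -lt0n.
Qed.

Lemma lerXq (R : realType) (q : nat) (x y : R) : (0 < q)%N -> 0 <= x -> 0 <= y ->
  (x ^+ q <= y ^+ q) = (x <= y).
Proof. by move=> q0 x0 y0; rewrite (ler_pXn2r q0) ?nnegrE. Qed.

Lemma ltrXq (R : realType) (q : nat) (x y : R) : (0 < q)%N -> 0 <= x -> 0 <= y ->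
  (x ^+ q < y ^+ q) = (x < y).
Proof. by move=> q0 x0 y0; rewrite (ltr_pXn2r q0) ?nnegrE. Qed.

Lemma key_div (R : realType) (a b e : R) : a != 0 -> a * b / (a * e) = b / e.
Proof. by move=> a0; rewrite invfM mulrACA divff // mul1r. Qed.

Lemma tv_ratio_scale (R : realType) p n (T : tensor R p n) (s : R) (x : 'I_n -> R) i :
  s != 0 -> tv T (fun j => s * x j) i / (s * x i) ^+ p.-1 = tv T x i / x i ^+ p.-1.
Proof. by move=> s0; rewrite tv_scale exprMn key_div // expf_neq0. Qed.

Lemma div_le1 (R : realType) (X a : R) : 0 < X -> a <= X -> X^-1 * a <= 1.
Proof. by move=> X0 aX; rewrite mulrC ler_pdivrMr // mul1r. Qed.

Section Pos.
Context (R : realType) (p n : nat) (T : tensor R p n.+1).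
Local Notation q := p.-1.

Lemma pos_PF (c : R) : (0 < q)%N -> 0 < c -> (forall i t, c <= T i t) ->
  exists lam (x : 'I_n.+1 -> R),
    (forall L, (forall i, L <= row_sum T i) -> L <= lam) /\
    (forall j, 0 <= x j <= 1) /\ (exists j, x j = 1) /\
    (forall i, tv T x i = lam * x i ^+ q).
Proof.
move=> q0 c0 Tc.
have T0 : nonneg_tensor T by move=> i t; exact: le_trans (ltW c0) (Tc i t).
pose C := \sum_i row_sum T i.
have rs0 i : 0 <= row_sum T i by apply: sumr_ge0 => ? _.
have rsC i : row_sum T i <= C.
  by rewrite /C (bigD1 i) //= lerDl; apply: sumr_ge0 => ? _.
have crs i : c <= row_sum T i.
  exact: le_trans (Tc i [ffun=> ord0]) (rs_ge_term _ _ T0).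
have C0 : 0 < C by apply: lt_le_trans c0 (le_trans (crs ord0) (rsC ord0)).
pose d := c / C.
have d0 : 0 < d by rewrite divr_gt0.
have d1 : d <= 1 by rewrite ler_pdivrMr // mul1r (le_trans (crs ord0)).
pose K := [set v : 'rV[R]_n.+1 | forall i, (fun=> `[d, 1]) i (v ord0 i)].
have cK : compact K by apply: rV_compact => i; exact: segment_compact.
pose vec (v : 'rV[R]_n.+1) : 'I_n.+1 -> R := fun j => v ord0 j.
pose ratio (v : 'rV[R]_n.+1) (i : 'I_n.+1) : R := tv T (vec v) i / (vec v i) ^+ q.
pose g v := \big[Order.min/ratio v ord0]_(i < n.+1) ratio v i.
have inK v : v \in K -> forall i, d <= v ord0 i <= 1.
  by rewrite inE => hv i; have := hv i; rewrite /= in_itv.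
have Kin (v : 'rV[R]_n.+1) : (forall i, d <= v ord0 i <= 1) -> v \in K.
  by move=> hv; rewrite inE => i /=; rewrite in_itv /=; exact: hv.
have cont_tv i v : {for v, continuous (fun w => tv T (vec w) i)}.
  apply: cont_sum => t; apply: continuousM; first exact: cst_continuous.
  by apply: cont_prod => j; exact: coord_continuous.
have cg : {within K, continuous g}.
  apply: continuous_in_subspaceT => v /inK hv.
  have cr i : {for v, continuous (ratio^~ i)}.
    apply: continuousM; first exact: cont_tv.
    apply: continuousV; last by apply: cont_exp; exact: coord_continuous.
    by rewrite expf_neq0 // gt_eqF // (lt_le_trans d0) //; case/andP: (hv i).
  exact: cont_min.
have K0 : K !=set0.
  by exists (const_mx 1) => i /=; rewrite in_itv /= mxE d1 lexx.
have [vs vsK vsmax] := EVT_max_rV K0 cK cg.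
pose mu := g vs.
pose xs := vec vs.
have xsK := inK _ vsK.
have xs0 j : 0 < xs j by apply: lt_le_trans d0 _; case/andP: (xsK j).
have xsq0 j : 0 < xs j ^+ q by apply: exprn_gt0.
have hL L : (forall i, L <= row_sum T i) -> L <= mu.
  move=> hLi; apply: le_trans (vsmax (const_mx 1) (Kin _ _)); last first.
    by move=> i; rewrite mxE d1 lexx.
  have r1 i : ratio (const_mx 1) i = row_sum T i.
    rewrite /ratio (_ : vec _ = fun=> 1); last by apply: funext => j; rewrite /vec mxE.
    rewrite expr1n divr1.
    by rewrite tv_const // expr1n mulr1.
  by apply/bigmin_geP; split; [rewrite r1 | move=> i _; rewrite r1].
have mu_c : c <= mu by exact: hL.
have mu0 : 0 < mu by exact: lt_le_trans c0 mu_c.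
have hge i : mu * xs i ^+ q <= tv T xs i.
  by rewrite -ler_pdivlMr //; exact: bigmin_le.
have heq : forall i, tv T xs i = mu * xs i ^+ q.
  suff: [forall i, tv T xs i == mu * xs i ^+ q] by move/forallP => h i; apply/eqP.
  apply: contraT => /forallPn [i0 /eqP hne].
  have hlt0 : mu * xs i0 ^+ q < tv T xs i0 by rewrite lt_neqAle hge andbT; apply/eqP => e; apply: hne.
  pose y j := (tv T xs j / mu) `^ (q%:R^-1).
  have tvx0 j : 0 <= tv T xs j by apply: tv_ge0 => // k; exact: ltW.
  have yq j : y j ^+ q = tv T xs j / mu by rewrite powR_root // divr_ge0 // ltW.
  have y0 j : 0 <= y j by exact: powR_ge0.
  have xy j : xs j <= y j.
    rewrite -(lerXq q0 (ltW (xs0 j)) (y0 j)) yq ler_pdivlMr // mulrC; exact: hge.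
  have xy0 : xs i0 < y i0.
    by rewrite -(ltrXq q0 (ltW (xs0 i0)) (y0 i0)) yq ltr_pdivlMr // mulrC.
  have tvy j : mu * y j ^+ q < tv T y j.
    rewrite yq mulrC divfK ?gt_eqF //.
    apply: (tv_lt (j0 := i0)) => //; first exact: lt_le_trans c0 (Tc _ _).
    by move=> k; rewrite xy ltW.
  have [jy hjy] := argmax_ex y.
  have [jx hjx] := argmax_ex xs.
  pose My := y jy.
  have My0 : 0 < My by apply: lt_le_trans (xs0 i0) (le_trans (ltW xy0) (hjy i0)).
  pose z j := My^-1 * y j.
  have yj0 j : 0 < y j by apply: lt_le_trans (xs0 j) (xy j).
  have zK : (\row_j z j) \in K.
    apply: Kin => j; rewrite mxE; apply/andP; split; last first.
      by rewrite /z mulrC ler_pdivrMr // mul1r.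
    have zq : d <= z j ^+ q.
      have tvp k : 0 < tv T xs k.
        apply: lt_le_trans (tv_term k k T0 _); last by move=> l; exact: ltW.
        by rewrite mulr_gt0 // (lt_le_trans c0 (Tc _ _)).
      rewrite /z exprMn exprVn !yq.
      rewrite (_ : (tv T xs jy / mu)^-1 * (tv T xs j / mu) = tv T xs j / tv T xs jy); last first.
        by field; rewrite !gt_eqF.
      rewrite ler_pdivlMr //.
      have h1 : tv T xs jy <= C * xs jx ^+ q.
        apply: le_trans (tv_ub jy T0 _) _ => //; first by move=> k; rewrite ltW //= hjx.
        by apply: ler_wpM2r; [rewrite exprn_ge0 // ltW | exact: rsC].
      have h2 : c * xs jx ^+ q <= tv T xs j.
        apply: le_trans (tv_term j jx T0 _); last by move=> k; exact: ltW.
        by apply: ler_wpM2r; [rewrite exprn_ge0 // ltW | exact: Tc].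
      apply: le_trans _ h2; rewrite /d -mulrA ler_pM2l //.
      by rewrite mulrC ler_pdivrMr // mulrC; exact: h1.
    have zz0 : 0 <= z j by rewrite mulr_ge0 ?invr_ge0 ?ltW.
    rewrite -(lerXq q0 (ltW d0) zz0); apply: le_trans zq.
    by rewrite -[X in _ <= X]expr1 ler_wiXn2l // ?ltW // -lt0n.
  have hr k : mu < tv T y k / y k ^+ q by rewrite ltr_pdivlMr ?exprn_gt0 //; exact: tvy.
  have := vsmax _ zK; rewrite leNgt => /negP H; exfalso; apply: H.
  have vz : vec (\row_j z j) = fun j => My^-1 * y j by apply: funext => j; rewrite /vec mxE.
  apply/bigmin_gtP; split => [|i _]; rewrite /ratio vz tv_ratio_scale ?invr_eq0 ?gt_eqF //.
have [jx hjx] := argmax_ex xs.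
pose X := xs jx.
exists mu, (fun j => X^-1 * xs j); split; first exact: hL.
split.
  move=> j; apply/andP; split; first by apply: mulr_ge0; [rewrite invr_ge0; exact: ltW (xs0 jx) | exact: ltW (xs0 j)].
  exact: div_le1 (xs0 jx) (hjx j).
split; first by exists jx; exact: mulVf (lt0r_neq0 (xs0 jx)).
move=> i; rewrite tv_scale heq exprMn; ring.
Qed.

End Pos.

Lemma small_le0 (R : realType) (a K : R) : 0 < K ->
  (forall e, 0 < e -> e <= 1 -> a <= e * K) -> a <= 0.
Proof.
move=> K0 h; rewrite leNgt; apply/negP => a0.
pose e := Order.min 1 (a / (2 * K)).
have e0 : 0 < e by rewrite lt_min ltr01 divr_gt0 // mulr_gt0.
have e1 : e <= 1 by rewrite ge_min lexx.
have := h e e0 e1.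
have : e * K <= a / 2.
  have : e <= a / (2 * K) by rewrite ge_min lexx orbT.
  rewrite ler_pdivlMr ?mulr_gt0 // => H.
  rewrite ler_pdivlMr //; apply: le_trans H; rewrite le_eqVlt; apply/orP; left; apply/eqP; ring.
move=> H1 H2; have := le_trans H2 H1; rewrite ler_pdivlMr // => H3.
by move: a0 H3; lra.
Qed.

Lemma cont_norm (R : realType) m (f : 'rV[R]_m -> R) v :
  {for v, continuous f} -> {for v, continuous (fun w => `|f w|)}.
Proof. move=> hf; exact: (continuous_comp hf (@norm_continuous _ _ (f v))). Qed.

Section NonNeg.
Context (R : realType) (p n : nat) (T : tensor R p n.+1).
Local Notation q := p.-1.

Lemma nonneg_PF : (0 < q)%N -> nonneg_tensor T ->
  exists lam (x : 'I_n.+1 -> R),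
    (forall L, (forall i, L <= row_sum T i) -> L <= lam) /\
    (forall j, 0 <= x j <= 1) /\ (exists j, x j = 1) /\
    (forall i, tv T x i = lam * x i ^+ q).
Proof.
move=> q0 T0.
pose Te (e : R) : tensor R p n.+1 := fun i t => T i t + e.
pose N : R := \sum_(t : {ffun 'I_q -> 'I_n.+1}) 1.
pose P (x : 'I_n.+1 -> R) : R := \sum_(t : {ffun 'I_q -> 'I_n.+1}) \prod_(j < q) x (t j).
have N1 : 1 <= N.
  rewrite /N (bigD1 [ffun=> ord0]) //= lerDl; exact: sumr_ge0.
have N0 : 0 <= N by exact: le_trans ler01 N1.
have rsTe e i : 0 <= e -> row_sum (Te e) i = row_sum T i + e * N.
  move=> e0; rewrite /row_sum /N mulr_sumr -big_split /=; apply: eq_bigr => t _.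
  by rewrite mulr1 !ger0_norm ?addr_ge0 // T0.
have tvTe e x i : tv (Te e) x i = tv T x i + e * P x.
  by rewrite /tv /P mulr_sumr -big_split /=; apply: eq_bigr => t _; rewrite mulrDl.
have P0 x : (forall j, 0 <= x j <= 1) -> 0 <= P x <= N.
  move=> hx; apply/andP; split; first by apply: sumr_ge0 => t _; apply: prodr_ge0 => j _; case/andP: (hx (t j)).
  apply: ler_sum => t _; apply: le_trans (@ler_prod _ _ _ _ _ (fun=> 1) _) _.
    by move=> j _; exact: hx.
  by rewrite prodr_const expr1n.
pose Ls := \big[Order.min/row_sum T ord0]_i row_sum T i.
have Lsle i : Ls <= row_sum T i by exact: bigmin_le.
have rs0 i : 0 <= row_sum T i by apply: sumr_ge0 => ? _.
pose U := \sum_i row_sum T i + N.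
have rsU i : row_sum T i + N <= U.
  by rewrite lerD2r /U (bigD1 i) //= lerDl; apply: sumr_ge0 => ? _.
have approx e : 0 < e -> e <= 1 -> exists lam (x : 'I_n.+1 -> R),
    Ls <= lam <= U /\ (forall j, 0 <= x j <= 1) /\ (exists j, x j = 1) /\
    (forall i, `|tv T x i - lam * x i ^+ q| <= e * N).
  move=> e0 e1.
  have [lam [x [hL [hx [[j xj] heq]]]]] := @pos_PF R p n (Te e) e q0 e0 (fun i t => ler_wpDl (T0 i t) (lexx e)).
  exists lam, x; split.
    apply/andP; split.
      apply: hL => i; rewrite rsTe; last exact: ltW.
      apply: le_trans (Lsle i) _.
      by rewrite lerDl; apply: mulr_ge0; [exact: ltW | exact: N0].
    have := heq j; rewrite xj expr1n mulr1 => <-.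
    apply: le_trans (tv_ub j _ hx) _; first by move=> i t; rewrite addr_ge0 ?T0 ?ltW.
    rewrite expr1n mulr1 rsTe; last exact: ltW.
    apply: le_trans (rsU j); rewrite lerD2l.
    by rewrite ler_piMl.
  split; first exact: hx.
  split; first by exists j.
  move=> i; have := heq i; rewrite tvTe => <-.
  rewrite (_ : _ - _ = - (e * P x)); last by ring.
  rewrite normrN ger0_norm; last by apply: mulr_ge0; [exact: ltW | case/andP: (P0 x hx)].
  by rewrite ler_pM2l //; case/andP: (P0 x hx).
pose A (k : 'I_n.+2) : set R := if k == ord0 then `[Ls, U] else `[0, 1].
pose S := [set v : 'rV[R]_n.+2 | forall k, A k (v ord0 k)].
have cS : compact S by apply: rV_compact => k; rewrite /A; case: ifP => _; exact: segment_compact.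
pose vx (v : 'rV[R]_n.+2) : 'I_n.+1 -> R := fun i => v ord0 (lift ord0 i).
pose vl (v : 'rV[R]_n.+2) : R := v ord0 ord0.
pose Phi (v : 'rV[R]_n.+2) : R :=
  \sum_i `|tv T (vx v) i - vl v * vx v i ^+ q| + \prod_i (1 - vx v i).
have cPhi : {within S, continuous Phi}.
  apply: continuous_subspaceT => v.
  have cx i : {for v, continuous (fun w => vx w i)} by exact: coord_continuous.
  apply: continuousD.
    apply: cont_sum => i; apply: cont_norm; apply: continuousB.
      apply: cont_sum => t; apply: continuousM; first exact: cst_continuous.
      by apply: cont_prod => j; exact: cx.
    apply: continuousM; first exact: coord_continuous.
    by apply: cont_exp; exact: cx.
  apply: cont_prod => i; apply: continuousB; first exact: cst_continuous.
  exact: cx.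
have lnz (i : 'I_n.+1) : (lift ord0 i == ord0 :> 'I_n.+2) = false.
  by rewrite eq_sym; exact: negbTE (neq_lift _ _).
pose mk lam (x : 'I_n.+1 -> R) : 'rV[R]_n.+2 :=
  \row_k (if unlift ord0 k is Some i then x i else lam).
have mkl lam x : vl (mk lam x) = lam by rewrite /vl /mk mxE unlift_none.
have mkx lam x : vx (mk lam x) = x by apply: funext => i; rewrite /vx /mk mxE liftK.
have mkS lam x : Ls <= lam <= U -> (forall j, 0 <= x j <= 1) -> mk lam x \in S.
  move=> hl hx; rewrite inE => k /=; rewrite /A /mk mxE.
  case: (unliftP ord0 k) => [i ->|->]; last by rewrite eqxx /= in_itv.
  by rewrite lnz /= in_itv /=; exact: hx.
have S0 : S !=set0.
  have [lam [x [hl [hx _]]]] := approx 1 ltr01 (lexx 1).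
  by exists (mk lam x); rewrite -inE; apply: mkS.
have [vs vsS vsmin] := EVT_min_rV S0 cS cPhi.
pose K := (n.+1)%:R * N.
have K0 : 0 < K by rewrite mulr_gt0 // (lt_le_trans ltr01 N1).
have hvs : forall k, A k (vs ord0 k) by move: vsS; rewrite inE.
have vxs j : 0 <= vx vs j <= 1.
  by have := hvs (lift ord0 j); rewrite /A lnz /= in_itv.
have vls : Ls <= vl vs <= U by have := hvs ord0; rewrite /A eqxx /= in_itv.
have Phi0 : Phi vs <= 0.
  apply: (small_le0 K0) => e e0 e1.
  have [lam [x [hl [hx [[j xj] hres]]]]] := approx e e0 e1.
  apply: le_trans (vsmin _ (mkS _ _ hl hx)) _.
  rewrite /Phi mkl mkx [X in _ + X](bigD1 j) //= xj subrr mul0r addr0.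
  apply: le_trans (_ : _ <= \sum_(i < n.+1) (e * N)) _.
    by apply: ler_sum => i _; exact: hres.
  rewrite sumr_const card_ord -mulr_natr le_eqVlt; apply/orP; left; apply/eqP; rewrite /K; ring.
have sum0 : 0 <= \sum_i `|tv T (vx vs) i - vl vs * vx vs i ^+ q| by apply: sumr_ge0.
have prod0 : 0 <= \prod_i (1 - vx vs i).
  by apply: prodr_ge0 => i _; rewrite subr_ge0; case/andP: (vxs i).
have Phieq : Phi vs = 0 by apply/eqP; rewrite eq_le Phi0 addr_ge0.
have [s1 s2] : \sum_i `|tv T (vx vs) i - vl vs * vx vs i ^+ q| = 0 /\ \prod_i (1 - vx vs i) = 0.
  by move: Phieq sum0 prod0; rewrite /Phi; lra.
exists (vl vs), (vx vs); split.
  move=> L hL; apply: le_trans (_ : Ls <= _); last by case/andP: vls.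
  by apply/bigmin_geP; split => [|i _]; apply: hL.
split; first exact: vxs.
split.
  move/eqP: s2 => /prodf_eq0 [j _]; rewrite subr_eq0 => /eqP hj; exists j; exact: esym hj.
move=> i; apply/eqP; rewrite -subr_eq0 -normr_eq0.
have := s1; move/eqP; rewrite psumr_eq0 // => /allP/(_ i).
by rewrite mem_index_enum => /(_ isT) /implyP /(_ isT).
Qed.

End NonNeg.

Lemma sum_split_ffun (R : realType) (a b n : nat) (F : 'I_a -> {ffun 'I_b -> 'I_n} -> R) :
  \sum_(al : {ffun 'I_(a * b) -> 'I_n}) \prod_(j < a) F j [ffun l => al (mxvec_index j l)]
  = \prod_(j < a) \sum_(be : {ffun 'I_b -> 'I_n}) F j be.
Proof.
rewrite bigA_distr_bigA /=.
pose h (al : {ffun 'I_(a * b) -> 'I_n}) : {ffun 'I_a -> {ffun 'I_b -> 'I_n}} :=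
  [ffun j => [ffun l => al (mxvec_index j l)]].
have hinj : injective h.
  move=> al1 al2 e; apply/ffunP => s; case/mxvec_indexP: s => j l.
  by have := congr1 (fun f : {ffun 'I_a -> {ffun 'I_b -> 'I_n}} => f j l) e; rewrite /h !ffunE.
have hbij : bijective h.
  apply: inj_card_bij => //; rewrite !card_ffun !card_ord -expnM.
  by rewrite mulnC.
rewrite (reindex h); last by apply: onW_bij.
by apply: eq_bigr => al _; apply: eq_bigr => j _; rewrite /h ffunE.
Qed.

Lemma tprod_ge0 (R : realType) m k n (A : tensor R m n) (B : tensor R k n) :
  nonneg_tensor A -> nonneg_tensor B -> nonneg_tensor (tprod A B).
Proof.
move=> A0 B0 i al; apply: sumr_ge0 => t _; apply: mulr_ge0 => //.
by apply: prodr_ge0 => j _.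
Qed.

Lemma rs_tprod (R : realType) m k n (A : tensor R m n) (B : tensor R k n) i :
  nonneg_tensor A -> nonneg_tensor B ->
  row_sum (tprod A B) i = \sum_t A i t * \prod_(j < m.-1) row_sum B (t j).
Proof.
move=> A0 B0; rewrite /row_sum.
rewrite (eq_bigr (fun al => tprod A B i al)); last first.
  by move=> al _; rewrite ger0_norm //; exact: tprod_ge0.
rewrite /tprod exchange_big /=; apply: eq_bigr => t _.
rewrite -mulr_sumr; congr (_ * _).
rewrite -(sum_split_ffun (fun j be => `|B (t j) be|)).
by apply: eq_bigr => al _; apply: eq_bigr => j _; rewrite ger0_norm.
Qed.

Local Open Scope complex_scope.
Section RminRmax.
Context (R : realType) (p n : nat) (T : tensor R p n.+1).

Lemma rs_ge0 i : 0 <= row_sum T i.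
Proof. by apply: sumr_ge0 => ? _. Qed.

Lemma range_ne : range (row_sum T) !=set0.
Proof. by exists (row_sum T ord0), ord0. Qed.

Lemma rmin_le i : rmin T <= row_sum T i.
Proof.
apply: (ge_inf _ (ex_intro2 _ _ i I erefl)).
by exists 0 => y [j _ <-]; exact: rs_ge0.
Qed.

Lemma le_rmin L : (forall i, L <= row_sum T i) -> L <= rmin T.
Proof. by move=> h; apply: lb_le_inf; [exact: range_ne | move=> y [j _ <-]]. Qed.

Lemma rmin_ge0 : 0 <= rmin T.
Proof. by apply: le_rmin => i; exact: rs_ge0. Qed.

Lemma le_rmax i : row_sum T i <= rmax T.
Proof.
apply: (ub_le_sup _ (ex_intro2 _ _ i I erefl)).
exists (\sum_j row_sum T j) => y [j _ <-].
by rewrite (bigD1 j) //= lerDl; apply: sumr_ge0 => ? _; exact: rs_ge0.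
Qed.

Lemma rmax_ge0 : 0 <= rmax T.
Proof. exact: le_trans (rs_ge0 ord0) (le_rmax ord0). Qed.

End RminRmax.

Lemma normC_re (R : realType) (z : R[i]) : `|z| = (complex.Re `|z|)%:C.
Proof. by rewrite normc_def. Qed.

Lemma eig_bound (R : realType) p n (T : tensor R p n.+1) (lam : R[i]) :
  nonneg_tensor T -> Defs.eigenvalue T lam -> exists i, `|lam| <= (row_sum T i)%:C.
Proof.
move=> T0 [x [[i1 xi1] heq]].
pose a i := complex.Re `|x i|.
have [i0 hi0] := argmax_ex a.
have xle i : `|x i| <= `|x i0| by rewrite (normC_re (x i)) (normC_re (x i0)) lecR; exact: hi0.
have x0 : 0 < `|x i0| by apply: lt_le_trans (xle i1); rewrite normr_gt0.
exists i0.
have xq0 : 0 < `|x i0| ^+ p.-1 by exact: exprn_gt0.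
rewrite -(ler_pM2r xq0) (_ : `|lam| * _ = `|lam * x i0 ^+ p.-1|); last by rewrite normrM normrX.
rewrite -heq; apply: le_trans (ler_norm_sum _ _ _) _.
have -> : (row_sum T i0)%:C * `|x i0| ^+ p.-1 = \sum_t (T i0 t)%:C * `|x i0| ^+ p.-1.
  rewrite -mulr_suml /row_sum rmorph_sum; congr (_ * _); apply: eq_bigr => t _.
  by rewrite ger0_norm.
apply: ler_sum => t _; rewrite normrM normr_prod.
have Tc : 0 <= (T i0 t)%:C by rewrite lecR.
rewrite ger0_norm //; apply: ler_wpM2l => //.
apply: le_trans (@ler_prod _ _ _ _ _ (fun=> `|x i0|) _) _.
  by move=> j _; rewrite normr_ge0 xle.
by rewrite prodr_const card_ord.
Qed.

Local Close Scope classical_set_scope.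
Local Open Scope complex_scope.

Theorem theorem4p1 (R : realType) (m k n : nat) (A : tensor R m n) (B : tensor R k n) :
  (2 <= m)%N -> (2 <= k)%N -> (1 <= n)%N ->
  nonneg_tensor A -> nonneg_tensor B ->
  rmin A * rmin B ^+ m.-1 <= spec_rad (tprod A B) /\
  spec_rad (tprod A B) <= rmax A * rmax B ^+ m.-1.
Proof.
move=> hm hk; case: n A B => [//|n] A B _ A0 B0.
have T0 := tprod_ge0 A0 B0.
have hm' : (0 < m.-1)%N by case: (m) hm => [|[|]].
have hk' : (0 < k.-1)%N by case: (k) hk => [|[|]].
have q0 : (0 < m.-1 * k.-1)%N by rewrite muln_gt0 hm' hk'.
pose E := [set r : R | exists lam, Defs.eigenvalue (tprod A B) lam /\ (r%:C)%C = `|lam|]%classic.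
have rsT_le i : row_sum (tprod A B) i <= rmax A * rmax B ^+ m.-1.
  rewrite rs_tprod //; apply: le_trans (_ : _ <= \sum_t A i t * rmax B ^+ m.-1) _.
    apply: ler_sum => t _; apply: ler_wpM2l; first exact: A0.
    apply: le_trans (@ler_prod _ _ _ _ _ (fun=> rmax B) _) _.
      by move=> j _; rewrite rs_ge0 le_rmax.
    by rewrite prodr_const card_ord.
  rewrite -mulr_suml ler_wpM2r ?exprn_ge0 ?rmax_ge0 //.
  apply: le_trans (le_rmax _ i); rewrite /row_sum le_eqVlt; apply/orP; left; apply/eqP.
  by apply: eq_bigr => t _; rewrite ger0_norm.
have Rb0 : 0 <= rmax A * rmax B ^+ m.-1 by rewrite mulr_ge0 ?exprn_ge0 ?rmax_ge0.
have ubE : forall r, E r -> r <= rmax A * rmax B ^+ m.-1.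
  move=> r [lam [hl hr]]; have [i hi] := eig_bound T0 hl.
  by apply: le_trans (rsT_le i); rewrite -lecR hr.
split; last first.
  have hE : spec_rad (tprod A B) = sup E by [].
  rewrite hE; have [->|E0] := eqVneq E set0; first by rewrite sup0.
  by apply: ge_sup; [exact/set0P | exact: ubE].
have [lam [x [hL [hx [[j xj] heq]]]]] := @nonneg_PF R _ n (tprod A B) q0 T0.
have Llam : rmin A * rmin B ^+ m.-1 <= lam.
  apply: hL => i; rewrite rs_tprod //.
  apply: le_trans (_ : _ <= \sum_t A i t * rmin B ^+ m.-1) _.
    rewrite -mulr_suml ler_wpM2r ?exprn_ge0 ?rmin_ge0 //.
    apply: le_trans (rmin_le _ i) _; rewrite /row_sum le_eqVlt; apply/orP; left; apply/eqP.
    by apply: eq_bigr => t _; rewrite ger0_norm.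
  apply: ler_sum => t _; apply: ler_wpM2l; first exact: A0.
  have -> : rmin B ^+ m.-1 = \prod_(j0 < m.-1) rmin B by rewrite prodr_const card_ord.
  by apply: ler_prod => l _; rewrite rmin_ge0 rmin_le.
apply: (le_trans Llam).
have hE : spec_rad (tprod A B) = sup E by [].
rewrite hE.
have lam0 : 0 <= lam by apply: le_trans Llam; rewrite mulr_ge0 ?exprn_ge0 ?rmin_ge0.
have Elam : E lam.
  exists lam%:C; split; last by rewrite ger0_norm // lecR.
  exists (fun i => (x i)%:C); split.
    by exists j; rewrite xj; apply/eqP => /complexI/eqP; rewrite oner_eq0.
  move=> i; rewrite -rmorphXn -rmorphM -heq /tv rmorph_sum; apply: eq_bigr => t _.
  by rewrite rmorphM rmorph_prod.
apply: (ub_le_sup _ Elam).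
by exists (rmax A * rmax B ^+ m.-1) => r /ubE.
Qed.
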